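(* Let $\mathsf{k}$ be a field, $R=\mathsf{k}[x,y]$, $S=R[t]$, $A=\mathsf{k}[t]/(t^3)$, $F_B=X-Y$, $G_1=Y^{[2]}-X^{[2]}$, $G_2=X^{[2]}Y-XY^{[2]}$ and $F=T^{[2]}F_B+TG_1+G_2\in Q_S$. Then $\operatorname{Ann}_R(G_1)\subseteq\operatorname{Ann}_R(F_B)$, so the ideals $I_i$ (defined below) satisfy $I_1=I_2=R$ and the condition $I_1\circ G_1\subseteq R\circ F_B$ fails; nevertheless $C=S/\operatorname{Ann}_S(F)$ is a free extension with base $A$ and fiber $B=R/\operatorname{Ann}_R(F_B)=R/(x+y,xy)$ (via $\iota,\pi$).
   Context: $Q_R=\mathsf{k}_{DP}[X,Y]$, $Q_S=\mathsf{k}_{DP}[X,Y,T]$ divided power rings with contraction action ($x^s\circ X^{[k]}=X^{[k-s]}$ for $k\ge s$, else $0$, similarly for $y,t$). $I_0=\operatorname{Ann}_R(F_B)$, $I_i=(I_{i-1}:\operatorname{Ann}_R(G_i))$ with $(I:J)=\{f:fJ\subseteq I\}$. $\iota:A\to C$ is induced by $\mathsf{k}[t]\subset S$, $\pi:C\to B$ by $t\mapsto 0$. $C$ is a free extension with base $A$ and fiber $B$ if $\iota$ makes $C$ a free $A$-module and $\pi$ is surjective with $\ker\pi=(\iota(A_+))C$. *)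

(* Defs.v *)
From HB Require Import structures.
From mathcomp Require Import all_boot all_order all_algebra.
Set Implicit Arguments. Unset Strict Implicit. Unset Printing Implicit Defensive.
Import GRing.Theory.
Local Open Scope ring_scope.

(* Polynomial rings in several variables are represented by iterated
   univariate polynomials:
     R   := k[x,y]   = {poly {poly k}}          (outer var x, inner var y)
     S   := R[t]     = {poly {poly {poly k}}}   (outer var t)
   Coefficient f`_i`_j of f : R is the coefficient of x^i y^j;
   coefficient f`_a`_i`_j of f : S is the coefficient of t^a x^i y^j.

   Divided power rings Q_R, Q_S are represented by the same types, as
   coefficient containers: G`_i`_j is the coefficient of X^[i] Y^[j]
   (and F`_a`_i`_j that of T^[a] X^[i] Y^[j]).  Only the k-module structure
   and the contraction action are used on Q_R, Q_S. *)

Notation Rpoly k := {poly {poly k}}.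
Notation Spoly k := {poly {poly {poly k}}}.

(* Lifting a contraction c : U -> V -> V to one more variable:
   (f o G)`_n = sum_i c f`_i G`_(n+i), i.e. x^s o X^[m] = X^[m-s] (0 if m<s). *)
Definition contrP (U V : nzRingType) (c : U -> V -> V)
  (f : {poly U}) (G : {poly V}) : {poly V} :=
  \poly_(n < size G) \sum_(i < size f) c f`_i G`_(n + i).

Definition contr1 (k : fieldType) : {poly k} -> {poly k} -> {poly k} :=
  contrP (fun a b : k => a * b).
Definition contrR (k : fieldType) : Rpoly k -> Rpoly k -> Rpoly k :=
  contrP (@contr1 k).
Definition contrS (k : fieldType) : Spoly k -> Spoly k -> Spoly k :=
  contrP (@contrR k).

Definition AnnR (k : fieldType) (G : Rpoly k) : Rpoly k -> Prop :=
  fun f => contrR f G = 0.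
Definition AnnS (k : fieldType) (F : Spoly k) : Spoly k -> Prop :=
  fun f => contrS f F = 0.

Definition colon (T : nzRingType) (I J : T -> Prop) : T -> Prop :=
  fun f => forall g, J g -> I (f * g).

Definition xR (k : fieldType) : Rpoly k := 'X.
Definition yR (k : fieldType) : Rpoly k := ('X : {poly k})%:P.
Definition tS (k : fieldType) : Spoly k := 'X.

(* Elements of Q_R (monomial X^[i]Y^[j] is written xR^i * yR^j as a
   coefficient placeholder) *)
Definition FB (k : fieldType) : Rpoly k := xR k - yR k.
Definition G1 (k : fieldType) : Rpoly k := yR k ^+ 2 - xR k ^+ 2.
Definition G2 (k : fieldType) : Rpoly k :=
  xR k ^+ 2 * yR k - xR k * yR k ^+ 2.
Definition FS (k : fieldType) : Spoly k :=
  tS k ^+ 2 * (FB k)%:P + tS k * (G1 k)%:P + (G2 k)%:P.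

Definition I0 (k : fieldType) := AnnR (FB k).
Definition I1 (k : fieldType) := colon (@I0 k) (AnnR (G1 k)).
Definition I2 (k : fieldType) := colon (@I1 k) (AnnR (G2 k)).

Definition embT (k : fieldType) (a : {poly k}) : Spoly k :=
  map_poly (fun c : k => c%:P%:P) a.

(* C = S/J is a free extension with base A = k[t]/(t^n) and fiber B = R/I
   via iota : A -> C (induced by k[t] ⊂ S) and pi : C -> B (t |-> 0).
   Stated on representatives in S and R:
   - iota is well defined: t^n ∈ J;
   - C is a free A-module: there is an A-basis (b_i)_{i<m} of C, i.e. every
     element of C is an A-combination of the b_i, and an A-combination is 0
     in C only if all coefficients are 0 in A (i.e. divisible by t^n);
   - pi is well defined (J|_{t=0} ⊆ I) and surjective;
   - ker pi = (iota(A_+)) C, with A_+ = (t), i.e. the preimage of ker pi in S,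
     {f | f(t=0) ∈ I}, equals J + tS. *)
Definition free_extension (k : fieldType) (n : nat)
  (J : Spoly k -> Prop) (I : Rpoly k -> Prop) : Prop :=
  [/\ J (tS k ^+ n),
      exists (m : nat) (b : 'I_m -> Spoly k),
        (forall f : Spoly k, exists a : 'I_m -> {poly k},
            J (f - \sum_(i < m) embT (a i) * b i)) /\
        (forall a : 'I_m -> {poly k},
            J (\sum_(i < m) embT (a i) * b i) ->
            forall i, ('X ^+ n %| a i)%R),
      (forall f : Spoly k, J f -> I f`_0),
      (forall g : Rpoly k, exists f : Spoly k, I (f`_0 - g))
    & (forall f : Spoly k,
          I f`_0 <-> exists g h : Spoly k, J g /\ f = g + tS k * h)].

(* Main.v *)
Require Import Defs.
From HB Require Import structures.
From mathcomp Require Import all_boot all_order all_algebra.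
From mathcomp Require Import ring.
Import GRing.Theory.
Local Open Scope ring_scope.

Module Helpers.
Set Implicit Arguments. Unset Strict Implicit.
Arguments FB : simpl never.
Arguments G1 : simpl never.
Arguments G2 : simpl never.

Lemma sum_ext0 (V : nmodType) (F : nat -> V) m M : (m <= M)%N ->
  (forall i, (m <= i)%N -> F i = 0) ->
  \sum_(i < m) F i = \sum_(i < M) F i.
Proof.
move=> hmM h0; rewrite -!(big_mkord xpredT F) (big_cat_nat (leq0n m) hmM) /=.
rewrite [X in _ = _ + X]big1_seq ?addr0 // => i /andP[_]; rewrite mem_index_iota => /andP[hi _]; exact: h0.
Qed.

Lemma coef_contrP (U V : nzRingType) (c : U -> V -> V) (f : {poly U}) (G : {poly V}) N n :
  (forall v, c 0 v = 0) -> (forall u, c u 0 = 0) ->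
  (forall j, (N <= j)%N -> G`_j = 0) ->
  (contrP c f G)`_n = \sum_(i < N) c f`_i G`_(n + i).
Proof.
move=> c0 c1 hG; rewrite /contrP coef_poly; case: ltnP => hn.
  rewrite (@sum_ext0 _ (fun i => c f`_i G`_(n + i)) (size f) (size f + N)) ?leq_addr //; last first.
    by move=> i hi; rewrite nth_default.
  rewrite -(@sum_ext0 _ (fun i => c f`_i G`_(n + i)) N (size f + N)) ?leq_addl //.
  by move=> i hi; rewrite hG ?c1 // (leq_trans hi) ?leq_addl.
rewrite big1 // => i _; rewrite [G`_(n + i)]nth_default ?c1 //.
exact: (leq_trans hn (leq_addr _ _)).
Qed.

Lemma contrP0l (U V : nzRingType) (c : U -> V -> V) G : contrP c 0 G = 0.
Proof. by apply/polyP=> i; rewrite coef_poly size_poly0 big_ord0 coef0 if_same. Qed.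
Lemma contrP0r (U V : nzRingType) (c : U -> V -> V) f : contrP c f 0 = 0.
Proof. by apply/polyP=> i; rewrite coef_poly size_poly0 coef0. Qed.

Section K.
Variable k : fieldType.

Definition bnd1 (p : {poly k}) := forall j, (3 <= j)%N -> p`_j = 0.
Definition bnd2 (G : Rpoly k) := forall i j, (3 <= i)%N || (3 <= j)%N -> G`_i`_j = 0.
Definition bnd3 (F : Spoly k) := forall a i j, [|| (3 <= a)%N, (3 <= i)%N | (3 <= j)%N] -> F`_a`_i`_j = 0.

Lemma coef_contr1 (p q : {poly k}) l : bnd1 q ->
  (contr1 p q)`_l = \sum_(r < 3) p`_r * q`_(l + r).
Proof. by move=> hq; rewrite /contr1 (@coef_contrP _ _ _ _ _ 3) // => *; rewrite ?mul0r ?mulr0. Qed.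

Lemma bnd2_1 G : bnd2 G -> forall j, (3 <= j)%N -> G`_j = 0.
Proof. by move=> hG j hj; apply/polyP=> l; rewrite coef0 hG ?hj. Qed.

Lemma coef_contrR (f G : Rpoly k) m l : bnd2 G ->
  (contrR f G)`_m`_l = \sum_(j < 3) \sum_(r < 3) f`_j`_r * G`_(m + j)`_(l + r).
Proof.
move=> hG; rewrite /contrR (@coef_contrP _ _ _ _ _ 3).
- rewrite coef_sum; apply: eq_bigr => j _; rewrite coef_contr1 //.
  by move=> r hr; rewrite hG ?hr ?orbT.
- exact: contrP0l.
- exact: contrP0r.
- exact: bnd2_1.
Qed.

Lemma bnd3_2 F a : bnd3 F -> bnd2 F`_a.
Proof. by move=> hF i j h; rewrite hF // h orbT. Qed.
Lemma bnd3_1 F : bnd3 F -> forall a, (3 <= a)%N -> F`_a = 0.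
Proof.
by move=> hF a ha; apply/polyP=> i; apply/polyP=> j; rewrite !coef0 hF ?ha.
Qed.

Lemma coef_contrS (f F : Spoly k) n m l : bnd3 F ->
  (contrS f F)`_n`_m`_l = \sum_(i < 3) \sum_(j < 3) \sum_(r < 3)
     f`_i`_j`_r * F`_(n + i)`_(m + j)`_(l + r).
Proof.
move=> hF; rewrite /contrS (@coef_contrP _ _ _ _ _ 3).
- rewrite !coef_sum; apply: eq_bigr => i _; rewrite coef_contrR //.
  exact: bnd3_2.
- exact: contrP0l.
- exact: contrP0r.
- exact: bnd3_1.
Qed.

Lemma contrS_eq0 (f F : Spoly k) : bnd3 F ->
  (forall n m l, (n < 3)%N -> (m < 3)%N -> (l < 3)%N -> (contrS f F)`_n`_m`_l = 0) ->
  contrS f F = 0.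
Proof.
move=> hF h; apply/polyP=> n; apply/polyP=> m; apply/polyP=> l; rewrite !coef0.
case: (ltnP n 3) => hn; last first.
  rewrite coef_contrS // big1 // => i _; rewrite big1 // => j _; rewrite big1 // => r _.
  by rewrite hF ?mulr0 // (leq_trans hn) ?leq_addr.
case: (ltnP m 3) => hm; last first.
  rewrite coef_contrS // big1 // => i _; rewrite big1 // => j _; rewrite big1 // => r _.
  by rewrite hF ?mulr0 // (leq_trans hm (leq_addr _ _)) ?orbT.
case: (ltnP l 3) => hl; last first.
  rewrite coef_contrS // big1 // => i _; rewrite big1 // => j _; rewrite big1 // => r _.
  by rewrite hF ?mulr0 // (leq_trans hl (leq_addr _ _)) ?orbT.
exact: h.
Qed.

Lemma contrR_eq0 (f G : Rpoly k) : bnd2 G ->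
  (forall m l, (m < 3)%N -> (l < 3)%N -> (contrR f G)`_m`_l = 0) ->
  contrR f G = 0.
Proof.
move=> hG h; apply/polyP=> m; apply/polyP=> l; rewrite !coef0.
case: (ltnP m 3) => hm; last first.
  rewrite coef_contrR // big1 // => j _; rewrite big1 // => r _.
  by rewrite hG ?mulr0 // (leq_trans hm) ?leq_addr.
case: (ltnP l 3) => hl; last first.
  rewrite coef_contrR // big1 // => j _; rewrite big1 // => r _.
  by rewrite hG ?mulr0 // (leq_trans hl (leq_addr _ _)) ?orbT.
exact: h.
Qed.

End K.

Section K.
Variable k : fieldType.

Definition fbc (b c : nat) : k :=
  match b, c with 1%N, 0%N => 1 | 0%N, 1%N => -1 | _, _ => 0 end.
Definition g1c (b c : nat) : k :=
  match b, c with 0%N, 2%N => 1 | 2%N, 0%N => -1 | _, _ => 0 end.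
Definition g2c (b c : nat) : k :=
  match b, c with 2%N, 1%N => 1 | 1%N, 2%N => -1 | _, _ => 0 end.

Lemma FB_coef b c : (FB k)`_b`_c = fbc b c.
Proof.
rewrite /FB /xR /yR.
by case: b => [|[|[|b]]]; case: c => [|[|[|c]]]; rewrite !coefE /= ?(subr0, sub0r, oppr0, mulr0n, mulr1n).
Qed.
Lemma G1_coef b c : (G1 k)`_b`_c = g1c b c.
Proof.
rewrite /G1 /xR /yR !expr2.
by case: b => [|[|[|b]]]; case: c => [|[|[|c]]]; rewrite !coefE /= ?(subr0, sub0r, oppr0, mulr0n, mulr1n, mulr0, mul0r, mulr1, mul1r).
Qed.
Lemma G2_coef b c : (G2 k)`_b`_c = g2c b c.
Proof.
rewrite /G2 /xR /yR !expr2.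
by case: b => [|[|[|b]]]; case: c => [|[|[|c]]]; rewrite !coefE /= ?(subr0, sub0r, oppr0, mulr0n, mulr1n, mulr0, mul0r, mulr1, mul1r).
Qed.
Definition fsc (a b c : nat) : k :=
  match a with 0%N => g2c b c | 1%N => g1c b c | 2%N => fbc b c | _ => 0 end.

Lemma FS_c a : (FS k)`_a = if a == 0%N then G2 k else if a == 1%N then G1 k
   else if a == 2%N then FB k else 0.
Proof.
rewrite /FS /tS coefD coefD coefXnM coefXM !coefC.
by case: a => [|[|[|a]]] /=; rewrite ?subSS ?subn0 /= ?add0r ?addr0.
Qed.

Lemma FS_coef a b c : (FS k)`_a`_b`_c = fsc a b c.
Proof.
rewrite FS_c; case: a => [|[|[|a]]] /=; by rewrite ?coef0 ?FB_coef ?G1_coef ?G2_coef.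
Qed.

Lemma bnd3_FS : bnd3 (FS k).
Proof.
move=> a b c; rewrite FS_coef.
by case: a => [|[|[|a]]] //=; case: b => [|[|[|b]]] //=; case: c => [|[|[|c]]].
Qed.
Lemma bnd2_FB : bnd2 (FB k).
Proof.
move=> b c; rewrite FB_coef.
by case: b => [|[|[|b]]] //=; case: c => [|[|[|c]]].
Qed.
Lemma bnd2_G1 : bnd2 (G1 k).
Proof.
move=> b c; rewrite G1_coef.
by case: b => [|[|[|b]]] //=; case: c => [|[|[|c]]].
Qed.
End K.

Section K.
Variable k : fieldType.

Lemma coefS_FS (f : Spoly k) n m l : (contrS f (FS k))`_n`_m`_l =
  \sum_(i < 3) \sum_(j < 3) \sum_(r < 3) f`_i`_j`_r * fsc k (n + i) (m + j) (l + r).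
Proof.
rewrite coef_contrS; last exact: bnd3_FS. apply: eq_bigr => i _; apply: eq_bigr => j _.
by apply: eq_bigr => r _; rewrite FS_coef.
Qed.

Lemma coefS_exp (f : Spoly k) n m l : (contrS f (FS k))`_n`_m`_l =
  f`_0`_0`_0 * fsc k (n + 0) (m + 0) (l + 0) +
  f`_0`_0`_1 * fsc k (n + 0) (m + 0) (l + 1) +
  f`_0`_0`_2 * fsc k (n + 0) (m + 0) (l + 2) +
  f`_0`_1`_0 * fsc k (n + 0) (m + 1) (l + 0) +
  f`_0`_1`_1 * fsc k (n + 0) (m + 1) (l + 1) +
  f`_0`_1`_2 * fsc k (n + 0) (m + 1) (l + 2) +
  f`_0`_2`_0 * fsc k (n + 0) (m + 2) (l + 0) +
  f`_0`_2`_1 * fsc k (n + 0) (m + 2) (l + 1) +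
  f`_0`_2`_2 * fsc k (n + 0) (m + 2) (l + 2) +
  f`_1`_0`_0 * fsc k (n + 1) (m + 0) (l + 0) +
  f`_1`_0`_1 * fsc k (n + 1) (m + 0) (l + 1) +
  f`_1`_0`_2 * fsc k (n + 1) (m + 0) (l + 2) +
  f`_1`_1`_0 * fsc k (n + 1) (m + 1) (l + 0) +
  f`_1`_1`_1 * fsc k (n + 1) (m + 1) (l + 1) +
  f`_1`_1`_2 * fsc k (n + 1) (m + 1) (l + 2) +
  f`_1`_2`_0 * fsc k (n + 1) (m + 2) (l + 0) +
  f`_1`_2`_1 * fsc k (n + 1) (m + 2) (l + 1) +
  f`_1`_2`_2 * fsc k (n + 1) (m + 2) (l + 2) +
  f`_2`_0`_0 * fsc k (n + 2) (m + 0) (l + 0) +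
  f`_2`_0`_1 * fsc k (n + 2) (m + 0) (l + 1) +
  f`_2`_0`_2 * fsc k (n + 2) (m + 0) (l + 2) +
  f`_2`_1`_0 * fsc k (n + 2) (m + 1) (l + 0) +
  f`_2`_1`_1 * fsc k (n + 2) (m + 1) (l + 1) +
  f`_2`_1`_2 * fsc k (n + 2) (m + 1) (l + 2) +
  f`_2`_2`_0 * fsc k (n + 2) (m + 2) (l + 0) +
  f`_2`_2`_1 * fsc k (n + 2) (m + 2) (l + 1) +
  f`_2`_2`_2 * fsc k (n + 2) (m + 2) (l + 2).
Proof. by rewrite coefS_FS !big_ord_recr !big_ord0 /= !add0r !addrA. Qed.

Lemma lin_eq (x y e : k) : e = 0 -> x - y = e -> x = y.
Proof. by move=> -> /eqP; rewrite subr_eq0 => /eqP. Qed.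

Lemma lin_eqN (x y e : k) : e = 0 -> y - x = e -> x = y.
Proof. by move=> -> /eqP; rewrite subr_eq0 => /eqP. Qed.

Definition CondS (f : Spoly k) : Prop :=
  f`_0`_0`_0 = 0 /\ f`_0`_1`_0 = f`_0`_0`_1 /\ f`_1`_0`_0 = f`_0`_0`_1 /\
      f`_1`_0`_1 = f`_0`_0`_2 - f`_0`_2`_0 + f`_1`_1`_0 /\
      f`_2`_0`_0 = f`_0`_2`_0 - f`_0`_1`_1 + f`_1`_0`_1 /\
      f`_2`_0`_1 = f`_0`_2`_1 - f`_0`_1`_2 + f`_1`_0`_2 - f`_1`_2`_0 + f`_2`_1`_0.

Ltac expS := rewrite coefS_exp ?addn0 ?addn1 ?addn2 /=
  !mulr0 ?mulr1 ?mulrN1 ?add0r ?addr0.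

Lemma AnnS_FS (f : Spoly k) : AnnS (FS k) f <-> CondS f.
Proof.
split.
  rewrite /AnnS => H.
  have E : forall n m l, (contrS f (FS k))`_n`_m`_l = 0 by move=> n m l; rewrite H !coef0.
  move: (E 2%N 1%N 0%N); expS => E1.
  move: (E 2%N 0%N 0%N); expS => E2.
  move: (E 1%N 0%N 1%N); expS => E3.
  move: (E 1%N 0%N 0%N); expS => E4.
  move: (E 0%N 0%N 1%N); expS => E5.
  move: (E 0%N 0%N 0%N); expS => E6.
  split; [|split; [|split; [|split; [|split]]]].
  - by rewrite E1.
  - by apply: (lin_eq E2); ring.
  - by apply: (lin_eqN E3); ring.
  - by apply: (lin_eqN E4); ring.
  - by apply: (lin_eqN E5); ring.
  - by apply: (lin_eqN E6); ring.
case=> C1 [C2 [C3 [C4 [C5 C6]]]]; rewrite /AnnS; apply: contrS_eq0; first exact: bnd3_FS.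
move=> [|[|[|n]]] // [|[|[|m]]] // [|[|[|l]]] // _ _ _; expS;
  rewrite ?C6 ?C5 ?C4 ?C3 ?C2 ?C1; ring.
Qed.
End K.

Section K.
Variable k : fieldType.
Lemma coefR_FB (f : Rpoly k) m l : (contrR f (FB k))`_m`_l =
  f`_0`_0 * fbc k (m + 0) (l + 0) +
  f`_0`_1 * fbc k (m + 0) (l + 1) +
  f`_0`_2 * fbc k (m + 0) (l + 2) +
  f`_1`_0 * fbc k (m + 1) (l + 0) +
  f`_1`_1 * fbc k (m + 1) (l + 1) +
  f`_1`_2 * fbc k (m + 1) (l + 2) +
  f`_2`_0 * fbc k (m + 2) (l + 0) +
  f`_2`_1 * fbc k (m + 2) (l + 1) +
  f`_2`_2 * fbc k (m + 2) (l + 2).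
Proof.
rewrite coef_contrR; last exact: bnd2_FB.
by rewrite !big_ord_recr !big_ord0 /= !add0r !addrA !FB_coef.
Qed.

Lemma coefR_G1 (f : Rpoly k) m l : (contrR f (G1 k))`_m`_l =
  f`_0`_0 * g1c k (m + 0) (l + 0) +
  f`_0`_1 * g1c k (m + 0) (l + 1) +
  f`_0`_2 * g1c k (m + 0) (l + 2) +
  f`_1`_0 * g1c k (m + 1) (l + 0) +
  f`_1`_1 * g1c k (m + 1) (l + 1) +
  f`_1`_2 * g1c k (m + 1) (l + 2) +
  f`_2`_0 * g1c k (m + 2) (l + 0) +
  f`_2`_1 * g1c k (m + 2) (l + 1) +
  f`_2`_2 * g1c k (m + 2) (l + 2).
Proof.
rewrite coef_contrR; last exact: bnd2_G1.
by rewrite !big_ord_recr !big_ord0 /= !add0r !addrA !G1_coef.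
Qed.

Ltac expR L := rewrite L ?addn0 ?addn1 ?addn2 /= !mulr0 ?mulr1 ?mulrN1 ?add0r ?addr0.

Lemma AnnR_FB (f : Rpoly k) : AnnR (FB k) f <-> f`_0`_0 = 0 /\ f`_1`_0 = f`_0`_1.
Proof.
split.
  rewrite /AnnR => H.
  have E : forall m l, (contrR f (FB k))`_m`_l = 0 by move=> m l; rewrite H !coef0.
  move: (E 1%N 0%N); expR coefR_FB => E1.
  move: (E 0%N 0%N); expR coefR_FB => E2.
  by split=> //; apply: (lin_eq E2); ring.
case=> C1 C2; rewrite /AnnR; apply: contrR_eq0; first exact: bnd2_FB.
move=> [|[|[|m]]] // [|[|[|l]]] // _ _; expR coefR_FB; rewrite ?C2 ?C1; ring.
Qed.

Lemma AnnR_G1 (f : Rpoly k) : AnnR (G1 k) f ->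
  [/\ f`_0`_0 = 0, f`_0`_1 = 0 & f`_1`_0 = 0].
Proof.
rewrite /AnnR => H.
have E : forall m l, (contrR f (G1 k))`_m`_l = 0 by move=> m l; rewrite H !coef0.
move: (E 0%N 2%N); expR coefR_G1 => E1.
move: (E 0%N 1%N); expR coefR_G1 => E2.
move: (E 1%N 0%N); expR coefR_G1 => E3.
split=> //; by rewrite -[f`_1`_0]opprK E3 oppr0.
Qed.
End K.

Section K.
Variable k : fieldType.

Lemma claim1 (f : Rpoly k) : AnnR (G1 k) f -> AnnR (FB k) f.
Proof. by case/AnnR_G1=> h1 h2 h3; apply/AnnR_FB; rewrite h1 h2 h3. Qed.

Lemma I1_all (f : Rpoly k) : I1 f.
Proof.
move=> g /AnnR_G1 [g00 g01 g10]; apply/AnnR_FB; split.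
  by rewrite !coef0M g00 mulr0.
rewrite coefM big_ord_recr big_ord1 /= coefD !coef0M coefM big_ord_recr big_ord1 /= subn0 subnn.
by rewrite g00 g01 g10 !mulr0 !addr0.
Qed.

Lemma I2_all (f : Rpoly k) : I2 f.
Proof. by move=> g _; apply: I1_all. Qed.

Lemma claim3 : ~ (forall f : Rpoly k, I1 f -> exists h : Rpoly k,
        contrR f (G1 k) = contrR h (FB k)).
Proof.
move=> H; have [h Eh] := H 1 (I1_all 1).
have := congr1 (fun p : Rpoly k => p`_0`_2) Eh.
rewrite coefR_G1 coefR_FB ?addn0 ?addn1 ?addn2 /= !mulr0 ?add0r ?addr0.
by rewrite mulr1 -[1 : Rpoly k]polyC1 coefC /= -polyC1 coefC /= => /eqP; rewrite oner_eq0.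
Qed.

Lemma take2 (R : nzRingType) (p : {poly R}) : take_poly 2 p = (p`_0)%:P + (p`_1)%:P * 'X.
Proof.
apply/polyP=> i; rewrite coef_take_poly coefD coefC coefMX coefC.
by case: i => [|[|i]] /=; rewrite ?addr0 ?add0r.
Qed.
Lemma take1 (R : nzRingType) (p : {poly R}) : take_poly 1 p = (p`_0)%:P.
Proof.
apply/polyP=> i; rewrite coef_take_poly coefC.
by case: i => [|i].
Qed.

Lemma claim4 (f : Rpoly k) : AnnR (FB k) f <->
     exists a b : Rpoly k, f = a * (xR k + yR k) + b * (xR k * yR k).
Proof.
split; last first.
  case=> a [b ->]; apply/AnnR_FB; rewrite /xR /yR mulrDr mulrA.
  rewrite !coefD !coefMC !coefMX /= ?coefD ?coefMX ?coefMC ?coef0 /= ?mulr0 ?add0r ?addr0. by [].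
case/AnnR_FB=> f00 f10.
set c := f`_0`_1.
set u := drop_poly 2 f`_0.
set v := drop_poly 1 f`_1.
set g := drop_poly 2 f.
have hf : f = (f`_0)%:P + (f`_1)%:P * 'X + g * 'X^2 by rewrite -take2 poly_take_drop.
have E0 : f`_0 = c%:P * 'X + u * 'X^2.
  by rewrite -[LHS](poly_take_drop 2) take2 f00 add0r.
have E1 : f`_1 = c%:P + v * 'X.
  by rewrite -[LHS](poly_take_drop 1) take1 f10 expr1.
exists (c%:P%:P + yR k * u%:P + xR k * g), (v%:P - u%:P - g).
rewrite {1}hf E0 E1 /xR /yR ?rmorphD ?rmorphM ?rmorphXn /=.
ring.
Qed.
End K.

Section K.
Variable k : fieldType.

Lemma sum2 (V : nmodType) (F : 'I_2 -> V) : \sum_(i < 2) F i = F ord0 + F ord_max.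
Proof. by rewrite big_ord_recr big_ord1; congr (F _ + _); apply: val_inj. Qed.

Lemma ord2_cases (i : 'I_2) : i = ord0 \/ i = ord_max.
Proof. by case: i => [[|[|//]] Hi]; [left|right]; apply: val_inj. Qed.

Lemma Wcoef (u v : {poly k}) i j l :
  (embT u + embT v * (xR k)%:P)`_i`_j`_l =
  if l == 0%N then (if j == 0%N then u`_i else if j == 1%N then v`_i else 0) else 0.
Proof.
rewrite coefD coefMC /embT !coef_map_id0 // /xR.
by case: j => [|[|j]]; case: l => [|l]; rewrite !coefE /= ?mulr0 ?mul1r ?mulr1 ?add0r ?addr0 ?coef0.
Qed.

Lemma X3_coef i j l : (i < 3)%N -> ('X^3 : Spoly k)`_i`_j`_l = 0.
Proof. by move=> hi; rewrite coefXn ltn_eqF // mulr0n !coef0. Qed.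

Lemma ann_X3 : AnnS (FS k) (tS k ^+ 3).
Proof.
apply/AnnS_FS; rewrite /CondS /tS !X3_coef //.
by rewrite !subr0 !addr0.
Qed.

Definition pp (f : Spoly k) : seq k :=
  [:: f`_0`_0`_0; f`_1`_0`_0 - f`_0`_0`_1;
      f`_2`_0`_0 - f`_0`_2`_0 + f`_0`_1`_1 - f`_1`_0`_1].
Definition qq (f : Spoly k) : seq k :=
  [:: f`_0`_1`_0 - f`_0`_0`_1;
      f`_0`_0`_2 - f`_0`_2`_0 + f`_1`_1`_0 - f`_1`_0`_1;
      f`_0`_2`_1 - f`_0`_1`_2 + f`_1`_0`_2 - f`_1`_2`_0 + f`_2`_1`_0 - f`_2`_0`_1].

Lemma key (f : Spoly k) :
  AnnS (FS k) (f - (embT (Poly (pp f)) + embT (Poly (qq f)) * (xR k)%:P)).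
Proof.
apply/AnnS_FS; rewrite /CondS !coefB !Wcoef !coef_Poly /=.
by split; [|split; [|split; [|split; [|split]]]]; ring.
Qed.

End K.

Section K.
Variable k : fieldType.

Lemma embT_cons0 (a b : k) : embT (Poly [:: 0; a; b]) = tS k * embT (Poly [:: a; b]).
Proof.
apply/polyP=> i; rewrite /tS coefXM /embT !coef_map_id0 ?polyC0 // !coef_Poly.
by case: i => [|[|[|i]]] //=; rewrite ?polyC0 // coef_map_id0 ?polyC0 // coef_Poly.
Qed.

Lemma X3_dvd (p : {poly k}) : p`_0 = 0 -> p`_1 = 0 -> p`_2 = 0 -> ('X^3 %| p)%R.
Proof.
move=> h0 h1 h2; rewrite -(poly_take_drop 3 p).
have -> : take_poly 3 p = 0.
  by apply/polyP=> i; rewrite coef_take_poly coef0; case: i => [|[|[|i]]].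
by rewrite add0r dvdp_mull.
Qed.

Lemma c_part (f : Spoly k) : AnnS (FS k) f -> AnnR (FB k) f`_0.
Proof. by move/AnnS_FS=> [C1 [C2 _]]; apply/AnnR_FB. Qed.

Lemma free_part : free_extension 3 (AnnS (FS k)) (AnnR (FB k)).
Proof.
split.
- exact: ann_X3.
- have E0 : (val (ord0 : 'I_2) == 0%N) = true by [].
  have E1 : (val (ord_max : 'I_2) == 0%N) = false by [].
  exists 2%N, (fun i : 'I_2 => if val i == 0%N then 1 else (xR k)%:P); split.
    move=> f; exists (fun i : 'I_2 => if val i == 0%N then Poly (pp f) else Poly (qq f)).
    rewrite sum2 E0 E1 mulr1; exact: key.
  move=> a; rewrite sum2 E0 E1 mulr1 => /AnnS_FS; rewrite /CondS !Wcoef.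
  case=> C1 [C2 [C3 [C4 [C5 C6]]]]; move: C1 C2 C3 C4 C5 C6 => /= C1 C2 C3 C4 C5 C6.
  rewrite ?subr0 ?add0r ?addr0 in C4 C5 C6.
  by move=> i; case: (ord2_cases i) => ->; apply: X3_dvd.
- exact: c_part.
- move=> g; exists g%:P; have -> : (g%:P)`_0 = g by rewrite coefC.
  by rewrite subrr; apply/AnnR_FB; rewrite !coef0.
- move=> f; split.
    move/AnnR_FB=> [h0 h1].
    have K := key f.
    rewrite /pp /qq h0 h1 subrr !embT_cons0 in K.
    move: K; set A := embT (Poly _); set B := embT (Poly _) => K.
    exists (f - (tS k * A + tS k * B * (xR k)%:P)), (A + B * (xR k)%:P).
    split; first exact: K.
    ring.
  case=> g [h [Jg ->]].
  have -> : (g + tS k * h)`_0 = g`_0 by rewrite coefD /tS coefXM addr0.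
  exact: c_part.
Qed.
End K.

End Helpers.
Import Helpers.

Theorem mainTheorem6 (k : fieldType) :
  (forall f : Rpoly k, AnnR (G1 k) f -> AnnR (FB k) f) /\
  (forall f : Rpoly k, I1 f /\ I2 f) /\
  ~ (forall f : Rpoly k, I1 f -> exists h : Rpoly k,
        contrR f (G1 k) = contrR h (FB k)) /\
  (forall f : Rpoly k, AnnR (FB k) f <->
     exists a b : Rpoly k, f = a * (xR k + yR k) + b * (xR k * yR k)) /\
  free_extension 3 (AnnS (FS k)) (AnnR (FB k)).
Proof.
split; first exact: claim1.
split; first by move=> f; split; [exact: I1_all | exact: I2_all].
split; first exact: claim3.
split; first exact: claim4.
exact: free_part.
Qed.
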